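(* Let $d=1$ and, for probability measures $\mu$ on $\mathbb R$ with $\int|y|\,\mu(dy)<\infty$, let $$a(x,\mu)=x^2\Big(\int_{\mathbb R}|y|\,\mu(dy)\Big)^3,\qquad b(x,\mu)=-2x^3\int_{\mathbb R}|y|\,\mu(dy),\qquad L_\mu u=a(x,\mu)u''+b(x,\mu)u'.$$ (a) With $m=0$, $V(x)=x^2/2$ and $H\equiv0$, all assumptions of Corollary 2.3 hold: conditions (H1.1), (H1.2), (H1.3) and (H2) are satisfied, $|a(0,\mu)|+|b(0,\mu)|\le C_1+C_2\int H\,d\mu$ for any $C_1,C_2>0$, and there exist $C,\Lambda>0$ (e.g. $C=3$, $\Lambda=2$) such that $\int_{\mathbb R}L_\mu V\,d\mu\le C-\Lambda\int_{\mathbb R}V\,d\mu$ for every compactly supported probability measure $\mu$ on $\mathbb R$. (b) There is no function $U\in C^2(\mathbb R)$ with $U\ge0$, $U(x)\to+\infty$ as $|x|\to\infty$, together with positive numbers $C,\Lambda$, such that $L_\mu U(x)\le C-\Lambda U(x)$ for all $x\in\mathbb R$ and all probability measures $\mu$ with $\int U\,d\mu<\infty$ and $\int |y|\,d\mu<\infty$.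
   Context: For a function $V\in C^2(\mathbb R^d)$, $V\ge0$, $V\to\infty$ at infinity: $\mathcal P_R(V)$ is the set of probability measures with $\int V\,d\mu\le R$; $\mathcal P(V)$ those with $V\in L^1(\mu)$; $\mu_n\to\mu$ $V$-weakly in $\mathcal P(V)$ means $\int f\,d\mu_n\to\int f\,d\mu$ for all continuous $f$ with $f/V\to0$ at infinity. With $m=0$ (no nondegenerate variables, $z=x$), the conditions read: (H1.1) vacuous; (H1.2) for every $R>0$ and every bounded interval $K$: $\sup_{x\in K,\mu\in\mathcal P_R(V)}(|a(x,\mu)|+|b(x,\mu)|)<\infty$; (H1.3) for every $R>0$ and every bounded interval $K$ there is a nonnegative continuous monotone $\omega_{K,R}$ on $[0,\infty)$ with $\omega_{K,R}(0)=0$ and $\sup_{\mu\in\mathcal P_R(V)}(|a(x,\mu)-a(x',\mu)|+|b(x,\mu)-b(x',\mu)|)\le\omega_{K,R}(|x-x'|)$ for $x,x'\in K$; (H2) for every $R>0$, if $\mu_n\in\mathcal P_R(V)$ converges $V$-weakly to $\mu\in\mathcal P_R(V)$ then $|a(x,\mu_n)-a(x,\mu)|+|b(x,\mu_n)-b(x,\mu)|\to0$ for every $x$. Corollary 2.3 (for reference) asserts existence of a probability solution of $(a(x,\mu)\mu)''-(b(x,\mu)\mu)'=0$ under (H1), (H2), the bound $|a(0,\mu)|+|b(0,\mu)|\le C_1+C_2\int H\,d\mu$ with continuous $H\ge0$, $H/V\to0$, and $\int L_\mu V\,d\mu\le C-\Lambda\int V\,d\mu$ for all compactly supported probability measures $\mu$.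 *)

(* Defs.v *)
From HB Require Import structures.
From mathcomp Require Import all_boot all_order all_algebra.
From mathcomp Require Import all_classical all_reals all_analysis.
Set Implicit Arguments. Unset Strict Implicit. Unset Printing Implicit Defensive.
Import Order.TTheory GRing.Theory Num.Theory.
Import numFieldNormedType.Exports.
Local Open Scope classical_set_scope.
Local Open Scope ring_scope.

Section Defs.
Variable R : realType.

(* first absolute moment  int |y| mu(dy)  (as a real number; finite in all uses) *)
Definition moment1 (mu : probability R R) : R :=
  fine (\int[mu]_y (`|y|)%:E)%E.

Definition acoef (x : R) (mu : probability R R) : R := x ^+ 2 * (moment1 mu) ^+ 3.
Definition bcoef (x : R) (mu : probability R R) : R := - 2 * x ^+ 3 * moment1 mu.

Definition Lop (mu : probability R R) (u : R -> R) (x : R) : R :=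
  acoef x mu * derive1n 2 u x + bcoef x mu * derive1 u x.

Definition C2 (u : R -> R) : Prop :=
  (forall x, derivable u x 1) /\ (forall x, derivable (derive1 u) x 1) /\ continuous (derive1n 2 u).

Definition tends_to_infty (g : R -> R) : Prop :=
  g x @[x --> +oo] --> +oo /\ g x @[x --> -oo] --> +oo.

Definition Vfun (x : R) : R := x ^+ 2 / 2.

Definition inPV (V : R -> R) (mu : probability R R) : Prop :=
  (\int[mu]_x (V x)%:E < +oo)%E.

Definition inPRV (V : R -> R) (Rr : R) (mu : probability R R) : Prop :=
  (\int[mu]_x (V x)%:E <= Rr%:E)%E.

Definition Vweak_cvg (V : R -> R) (mun : nat -> probability R R)
  (mu : probability R R) : Prop :=
  forall f : R -> R, continuous f ->
    f x / V x @[x --> +oo] --> 0 -> f x / V x @[x --> -oo] --> 0 ->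
    (\int[mun n]_x (f x)%:E)%E @[n --> \oo] --> (\int[mu]_x (f x)%:E)%E.

Definition compact_supp (mu : probability R R) : Prop :=
  exists K : set R, compact K /\ mu (~` K) = 0%E.

End Defs.

(* Main.v *)
Require Import Defs.
From HB Require Import structures.
From mathcomp Require Import all_boot all_order all_algebra.
From mathcomp Require Import all_classical all_reals all_analysis.
From mathcomp Require Import ring lra measurable_realfun.
Import Order.TTheory GRing.Theory Num.Theory.
Import numFieldNormedType.Exports.
Local Open Scope classical_set_scope.
Local Open Scope ring_scope.

Section H.
Variable R : realType.

Lemma VfunE : @Vfun R = (2^-1) \*: (@idfun R ^+ 2).
Proof. by apply/funext => x; rewrite /Vfun /= mulrC. Qed.

Lemma Vfun_isd (x : R) : is_derive x 1 (@Vfun R) x.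
Proof.
rewrite VfunE.
have H := is_deriveZ (2^-1 : R) (is_deriveX 2 (@is_derive_id _ R x 1)).
suff E : x = 2^-1 *: ((2%:R * (@idfun R x) ^+ 2.-1) *: (1:R)) by rewrite {2}E.
rewrite -[RHS]/(2^-1 * ((2%:R * x ^+ 1) * 1)) expr1 mulr1 mulrA mulVf ?mul1r //.
Qed.

Lemma derive1_Vfun : derive1 (@Vfun R) = id.
Proof. by apply/funext => x; rewrite derive1E (@derive_val _ _ _ _ _ _ _ (Vfun_isd x)). Qed.

Lemma derive2_Vfun : derive1n 2 (@Vfun R) = cst 1.
Proof.
apply/funext => x /=. rewrite derive1_Vfun derive1E.
by rewrite (@derive_val _ _ _ _ _ _ _ (@is_derive_id _ _ x 1)).
Qed.

Lemma mVfun : measurable_fun setT (@Vfun R).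
Proof. by apply: measurable_funM => //; exact: measurable_funX. Qed.

Lemma Vfun_ge0 (y : R) : 0 <= Vfun y.
Proof. by rewrite /Vfun; apply: mulr_ge0 => //; rewrite sqr_ge0. Qed.

Lemma sqr_abs (y : R) : y ^+ 2 = `|y| ^+ 2.
Proof. by rewrite real_normK ?num_real. Qed.

Lemma mom_bound (mu : probability R R) Rr : inPRV (@Vfun R) Rr mu ->
  (\int[mu]_y (`|y|)%:E <= (2^-1 + Rr)%:E)%E.
Proof.
rewrite /inPRV => H.
apply: (@le_trans _ _ (\int[mu]_y ((cst (2^-1 : R)%:E) y + (Vfun y)%:E))%E).
  apply: ge0_le_integral => //.
  - by apply/measurable_EFinP; exact: normr_measurable.
  - by apply: emeasurable_funD => //; apply/measurable_EFinP; exact: mVfun.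
  - move=> y _; rewrite /Vfun /= -EFinD lee_fin sqr_abs.
    have := normr_ge0 y; set t := `|y|; move=> ht; rewrite -subr_ge0; have : 0 <= (t - 1) ^+ 2 by rewrite sqr_ge0. nra.
rewrite ge0_integralD //; last 3 first.
- by move=> y _ /=; rewrite lee_fin.
- by move=> y _; rewrite lee_fin; exact: Vfun_ge0.
- by apply/measurable_EFinP; exact: mVfun.
rewrite integral_cst //. rewrite [X in (_ * X)%E]probability_setT mule1 EFinD.
by apply: leeD.
Qed.

Lemma moment1_ge0 (mu : probability R R) : 0 <= moment1 mu.
Proof. by rewrite /moment1 fine_ge0 // integral_ge0. Qed.

Lemma moment1_fin (mu : probability R R) Rr : inPRV (@Vfun R) Rr mu ->
  (\int[mu]_y (`|y|)%:E)%E = (moment1 mu)%:E.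
Proof.
move=> H; rewrite /moment1 fineK // ge0_fin_numE ?integral_ge0 //.
by rewrite (le_lt_trans (@mom_bound mu Rr H)) // ltry.
Qed.

Lemma moment1_le (mu : probability R R) Rr : inPRV (@Vfun R) Rr mu ->
  moment1 mu <= 2^-1 + Rr.
Proof.
move=> H; have := @mom_bound mu Rr H.
by rewrite (@moment1_fin mu Rr H) lee_fin.
Qed.

Lemma lerX n {a b : R} : 0 <= a -> a <= b -> a ^+ n <= b ^+ n.
Proof. move=> a0 ab; apply: lerXn2r => //; rewrite nnegrE //; exact: le_trans ab. Qed.

Lemma itv_bound {k1 k2 x : R} : x \in `[k1, k2] -> `|x| <= `|k1| + `|k2|.
Proof.
rewrite in_itv /= => /andP[h1 h2].
have := ler_norm k1; have := ler_norm (- k1); have := ler_norm k2; have := ler_norm (-k2).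
rewrite !normrN ler_norml => *; apply/andP; split; lra.
Qed.

Lemma H12 (Rr : R) k1 k2 : exists B : R, forall x : R, x \in `[k1, k2] ->
  forall mu : probability R R, inPRV (@Vfun R) Rr mu ->
  `|acoef x mu| + `|bcoef x mu| <= B.
Proof.
set K : R := `|k1| + `|k2|; set Mb : R := 2^-1 + Rr.
exists (K ^+ 2 * Mb ^+ 3 + 2 * (K ^+ 3 * Mb)) => x hx mu hmu.
have hK := itv_bound hx; have m0 := moment1_ge0 mu; have mb := @moment1_le mu Rr hmu.
have a0 := normr_ge0 x.
have h2 := lerX 2 a0 hK; have h3 := lerX 3 a0 hK; have h4 := lerX 3 m0 mb.
rewrite /acoef /bcoef !normrM (ger0_norm m0) normrN normr_nat.
move: h2 h3 h4; rewrite !exprS !expr0 !mulr1 => h2 h3 h4.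
apply: lerD; first by apply: ler_pM; rewrite ?mulr_ge0.
rewrite -mulrA; apply: ler_wpM2l => //; apply: ler_pM; rewrite ?mulr_ge0 //.
Qed.

Lemma H13 (Rr : R) (Rr0 : 0 < Rr) k1 k2 : exists w : R -> R,
  (forall t, 0 <= t -> 0 <= w t) /\
  {within [set t : R | 0 <= t], continuous w} /\
  (forall s t, 0 <= s -> s <= t -> w s <= w t) /\
  w 0 = 0 /\
  forall x x' : R, x \in `[k1, k2] -> x' \in `[k1, k2] ->
    forall mu : probability R R, inPRV (@Vfun R) Rr mu ->
      `|acoef x mu - acoef x' mu| + `|bcoef x mu - bcoef x' mu| <= w `|x - x'|.
Proof.
set K : R := `|k1| + `|k2|; set Mb : R := 2^-1 + Rr.
set L : R := 2 * K * Mb ^+ 3 + 6 * K ^+ 2 * Mb.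
have K0 : 0 <= K by rewrite addr_ge0.
have Mb0 : 0 <= Mb by rewrite /Mb; lra.
have L0 : 0 <= L by rewrite /L addr_ge0 // !mulr_ge0 // exprn_ge0.
exists (fun t => L * t); split; first by move=> t t0; rewrite mulr_ge0.
split.
  apply: continuous_subspaceT; exact: mulrl_continuous.
split; first by move=> s t s0 st; rewrite ler_wpM2l.
split; first by rewrite mulr0.
move=> x x' hx hx' mu hmu.
have hK := itv_bound hx; have hK' := itv_bound hx'.
have m0 := moment1_ge0 mu; have mb := @moment1_le mu Rr hmu.
pose m := moment1 mu; rewrite -/m in m0 mb *.
have -> : acoef x mu - acoef x' mu = (x - x') * ((x + x') * m ^+ 3).
  by rewrite /acoef -/m; ring.
have -> : bcoef x mu - bcoef x' mu = (x - x') * (- 2 * m * (x ^+ 2 + x * x' + x' ^+ 2)).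
  by rewrite /bcoef -/m; ring.
rewrite [`|(x - x') * (_ * _)|]normrM [`|(x - x') * (- 2 * _ * _)|]normrM.
rewrite -mulrDr mulrC; apply: ler_wpM2r => //.
have hxb : -K <= x <= K by rewrite -ler_norml.
have hxb' : -K <= x' <= K by rewrite -ler_norml.
move: hxb hxb' => /andP[hx1 hx2] /andP[hx1' hx2'].
rewrite /L; apply: lerD.
  rewrite normrM (ger0_norm (exprn_ge0 3 m0)); apply: ler_pM; rewrite ?exprn_ge0 //; last exact: lerX.
  by rewrite ler_norml; apply/andP; split; lra.
have q0 : 0 <= x ^+ 2 + x * x' + x' ^+ 2 by nra.
have q1 : x ^+ 2 + x * x' + x' ^+ 2 <= 3 * K ^+ 2 by nra.
rewrite normrM (ger0_norm q0) normrM normrN normr_nat (ger0_norm m0).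
have := ler_pM (mulr_ge0 (ler0n _ 2) m0) q0 (ler_wpM2l (ler0n _ 2) mb) q1.
by move/le_trans; apply; rewrite le_eqVlt; apply/orP; left; apply/eqP; rewrite /Mb; ring.
Qed.

Lemma absV_key (e x : R) : 0 < e -> 2 / e < `|x| -> `| `|x| / Vfun x | < e.
Proof.
move=> e0 hx.
have t0 : 0 < `|x| by rewrite (le_lt_trans _ hx) // divr_ge0 // ltW.
have hV : Vfun x = `|x| ^+ 2 / 2 by rewrite /Vfun sqr_abs.
have V0 : 0 < Vfun x by rewrite hV divr_gt0 // exprn_gt0.
rewrite ger0_norm; last by rewrite divr_ge0 // ltW. rewrite ltr_pdivrMr // hV.
move: hx; rewrite ltr_pdivrMr // => hx.
move: t0 hx; set t := `|x| => t0 hx; nra.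
Qed.

Lemma absV_pinfty : (fun x : R => `|x| / Vfun x) @ +oo --> (0 : R).
Proof.
apply/cvgr0Pnorm_lt => e e0.
apply: filterS (nbhs_pinfty_gt (num_real (2 / e))) => x hx; apply: absV_key => //.
exact: lt_le_trans hx (ler_norm x).
Qed.

Lemma absV_ninfty : (fun x : R => `|x| / Vfun x) @ -oo --> (0 : R).
Proof.
apply/cvgr0Pnorm_lt => e e0.
apply: filterS (nbhs_ninfty_lt (num_real (- (2 / e)))) => x hx; apply: absV_key => //.
rewrite -normrN; apply: (lt_le_trans _ (ler_norm (- x))); lra.
Qed.

Lemma powcvg (mun : nat -> probability R R) (mu : probability R R) (c : R) n :
  moment1 (mun k) @[k --> \oo] --> moment1 mu ->
  (c * moment1 (mun k) ^+ n) @[k --> \oo] --> c * moment1 mu ^+ n.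
Proof.
move=> hm; elim: n => [|n IH].
  rewrite expr0 mulr1; exact: cvg_cst.
have -> : (fun k => c * moment1 (mun k) ^+ n.+1) =
  ((fun k => c * moment1 (mun k) ^+ n) \* (fun k => moment1 (mun k))).
  by apply/funext => k /=; rewrite exprSr mulrA.
rewrite exprSr mulrA; exact: cvgM.
Qed.

Lemma H2 (Rr : R) (mun : nat -> probability R R) (mu : probability R R) :
  (forall n, inPRV (@Vfun R) Rr (mun n)) -> inPRV (@Vfun R) Rr mu ->
  Vweak_cvg (@Vfun R) mun mu ->
  forall x : R,
    (`|acoef x (mun n) - acoef x mu| + `|bcoef x (mun n) - bcoef x mu|)
      @[n --> \oo] --> (0 : R).
Proof.
move=> hn h hw x.
have := hw _ (@norm_continuous _ R) absV_pinfty absV_ninfty.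
rewrite (@moment1_fin mu Rr h).
have -> : (fun n => \int[mun n]_x0 (`|x0|)%:E)%E = (fun n => (moment1 (mun n))%:E).
  by apply/funext => n; rewrite (@moment1_fin (mun n) Rr (hn n)).
move/fine_cvg => hm.
have ha : acoef x (mun k) @[k --> \oo] --> acoef x mu by exact: powcvg.
have hb : bcoef x (mun k) @[k --> \oo] --> bcoef x mu.
  have := @powcvg mun mu (- 2 * x ^+ 3) 1 hm.
  by rewrite /bcoef !expr1.
have ha0 : (`|acoef x (mun k) - acoef x mu|) @[k --> \oo] --> (0:R).
  by rewrite -[X in _ --> X](@normr0 _ R); apply: cvg_norm; apply/subr_cvg0.
have hb0 : (`|bcoef x (mun k) - bcoef x mu|) @[k --> \oo] --> (0:R).
  by rewrite -[X in _ --> X](@normr0 _ R); apply: cvg_norm; apply/subr_cvg0.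
rewrite -[X in _ --> X](addr0 (0:R)); exact: cvgD ha0 hb0.
Qed.

Lemma partb : ~ (exists U : R -> R,
       C2 U /\ (forall x, 0 <= U x) /\ tends_to_infty U /\
       exists C Lam : R, 0 < C /\ 0 < Lam /\
         forall (x : R) (mu : probability R R),
           inPV U mu -> (\int[mu]_y (`|y|)%:E < +oo)%E ->
           Lop mu U x <= C - Lam * U x).
Proof.
case=> U [[dU _] [U0 [[Up _] [C [Lam [C0 [L0 HL]]]]]]].
have cU : continuous U.
  by move=> x; apply: differentiable_continuous; apply/derivable1_diffP.
have mU : measurable_fun setT U by exact: continuous_measurable_fun.
pose mu := (\d_(0:R) : probability R R).
have i1 : (\int[mu]_y (`|y|)%:E)%E = 0%E.
  rewrite integral_dirac //; last by apply/measurable_EFinP; exact: normr_measurable.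
  by rewrite diracT normr0 mule0.
have m0 : moment1 mu = 0 by rewrite /moment1 i1.
have hpv : inPV U mu.
  rewrite /inPV integral_dirac //; last by apply/measurable_EFinP.
  by rewrite diracT mul1e ltry.
have hx : forall x, U x <= C / Lam.
  move=> x; have := HL x mu hpv; rewrite i1 ltry => /(_ isT).
  rewrite /Lop /acoef /bcoef m0 expr0n /= !mulr0 !mul0r addr0 subr_ge0 => h.
  by rewrite ler_pdivlMr // mulrC.
move/cvgryPge: Up => /(_ (C / Lam + 1)) H.
have [x hx'] := filter_ex H.
by have := hx x; lra.
Qed.

Lemma Vfun_infty : tends_to_infty (@Vfun R).
Proof.
split; apply/cvgryPge => A.
  apply: filterS (nbhs_pinfty_ge (num_real (`|A| + 2))) => x hx.
  have := ler_norm A; have := normr_ge0 A; rewrite /Vfun => *; nra.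
apply: filterS (nbhs_ninfty_le (num_real (- (`|A| + 2)))) => x hx.
have := ler_norm A; have := normr_ge0 A; rewrite /Vfun => *; nra.
Qed.

Lemma Vfun_C2 : C2 (@Vfun R).
Proof.
split; first by move=> x; exact: (@ex_derive _ _ _ _ _ _ _ (Vfun_isd x)).
split; first by move=> x; rewrite derive1_Vfun; exact: (@ex_derive _ _ _ _ _ _ _ (@is_derive_id _ R x 1)).
by rewrite derive2_Vfun; exact: cst_continuous.
Qed.

Lemma cs_ae (mu : probability R R) : compact_supp mu ->
  exists r : R, 0 < r /\ {ae mu, forall y, `|y| <= r}.
Proof.
case=> K [cK muK].
have bK : \forall M \near +oo, forall y, K y -> `|y| <= M.
  by have := compact_bounded cK.
have [r [hr r0]] := filter_ex (filterI bK (nbhs_pinfty_gt (num_real (0:R)))).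
exists r; split => //.
exists (~` K); split => //.
  apply: measurableC; apply: closed_measurable; apply: compact_closed => //.
move=> y /= hy Ky; apply: hy; exact: hr.
Qed.

Lemma cs_int (mu : probability R R) (r : R) (hae : {ae mu, forall y, `|y| <= r})
  (f : R -> R) (B : R) :
  measurable_fun setT f -> (forall y, `|y| <= r -> `|f y| <= B) -> 0 <= B ->
  mu.-integrable setT (EFin \o f).
Proof.
move=> mf hf B0; apply/integrableP; split; first exact/measurable_EFinP.
apply: (@le_lt_trans _ _ (\int[mu]_y (cst B%:E) y)%E).
  apply: ae_ge0_le_integral => //.
  - by apply: measurableT_comp => //; exact/measurable_EFinP.
  - by apply: filterS hae => y hy _ /=; rewrite lee_fin; exact: hf.
rewrite integral_cst //. rewrite [X in (_ * X)%E]probability_setT mule1. exact: ltry.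
Qed.

Lemma ptF4 {c d t : R} : 0 < c -> d * c ^+ 2 = 1 -> 0 <= t ->
  0 <= c * t - t ^+ 2 + d * t ^+ 4.
Proof.
move=> c0 hd t0.
have key : 0 <= c ^+ 3 * t - c ^+ 2 * t ^+ 2 + t ^+ 4.
  have [tc|ct] := leP t c.
    have h1 : 0 <= c ^+ 2 * t * (c - t).
      by apply: mulr_ge0; [apply: mulr_ge0; [exact: sqr_ge0|] | rewrite subr_ge0].
    have h2 : 0 <= t ^+ 4 by rewrite exprn_ge0.
    have -> : c ^+ 3 * t - c ^+ 2 * t ^+ 2 + t ^+ 4 = c ^+ 2 * t * (c - t) + t ^+ 4 by ring.
    by rewrite addr_ge0.
  have h1 : 0 <= t ^+ 2 * (t ^+ 2 - c ^+ 2).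
    apply: mulr_ge0; first exact: sqr_ge0.
    by rewrite subr_ge0; apply: lerX; rewrite ltW.
  have h2 : 0 <= c ^+ 3 * t by rewrite mulr_ge0 // exprn_ge0 // ltW.
  have -> : c ^+ 3 * t - c ^+ 2 * t ^+ 2 + t ^+ 4 = c ^+ 3 * t + t ^+ 2 * (t ^+ 2 - c ^+ 2) by ring.
  by rewrite addr_ge0.
have d0 : 0 <= d.
  have c2 : 0 < c ^+ 2 by rewrite exprn_gt0.
  by rewrite -(pmulr_lge0 _ c2) hd.
have -> : c * t - t ^+ 2 + d * t ^+ 4 = d * (c ^+ 3 * t - c ^+ 2 * t ^+ 2 + t ^+ 4).
  have e1 : c * t = d * c ^+ 2 * (c * t) by rewrite hd mul1r.
  have e2 : t ^+ 2 = d * c ^+ 2 * t ^+ 2 by rewrite hd mul1r.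
  rewrite {1}e1 {1}e2; ring.
by rewrite mulr_ge0.
Qed.

Section CS.
Variable mu : probability R R.
Variable r : R.
Hypothesis r0 : 0 < r.
Hypothesis hae : {ae mu, forall y, `|y| <= r}.

Definition intg (f : R -> R) := mu.-integrable setT (EFin \o f).

Lemma intD (f g : R -> R) : intg f -> intg g -> intg (fun y => f y + g y).
Proof.
rewrite /intg => hf hg; apply: (eq_integrable measurableT ((EFin \o f) \+ (EFin \o g))%E); last first.
  exact: (integrableD measurableT hf hg).
by move=> y _; rewrite /= EFinD.
Qed.

Lemma intZ c (f : R -> R) : intg f -> intg (fun y => c * f y).
Proof.
rewrite /intg => hf; apply: (eq_integrable measurableT (fun y => c%:E * (EFin \o f) y)%E); last first.
  exact: (integrableZl measurableT c hf).
by move=> y _; rewrite /= EFinM.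
Qed.

Lemma intC c : intg (fun _ => c).
Proof. by rewrite /intg; apply: (@cs_int mu r hae _ `|c|) => //. Qed.

Lemma int1 : intg (fun y => `|y|).
Proof.
rewrite /intg; apply: (@cs_int mu r hae (fun y : R => `|y|) r).
- exact: normr_measurable.
- by move=> y; rewrite normr_id.
- exact: ltW.
Qed.

Lemma int2 : intg (fun y => y ^+ 2).
Proof.
rewrite /intg; rewrite /intg; apply: (@cs_int mu r hae (fun y : R => y ^+ 2) (r ^+ 2)).
- by apply: measurable_funX.
- by move=> y hy; rewrite normrX; apply: lerX.
- exact: exprn_ge0 (ltW r0).
Qed.

Lemma int4 : intg (fun y => y ^+ 4).
Proof.
rewrite /intg; rewrite /intg; apply: (@cs_int mu r hae (fun y : R => y ^+ 4) (r ^+ 4)).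
- by apply: measurable_funX.
- by move=> y hy; rewrite normrX; apply: lerX.
- exact: exprn_ge0 (ltW r0).
Qed.


Ltac ints := repeat first [ apply: intD | apply: intZ | apply: intC | exact: int1 | exact: int2 | exact: int4 ].

Definition M1 := \int[mu]_y `|y|.
Definition M2 := \int[mu]_y (y ^+ 2).
Definition M4 := \int[mu]_y (y ^+ 4).

Lemma LIN p0 p1 p2 p4 :
  \int[mu]_y (p1 * `|y| + p2 * y ^+ 2 + p4 * y ^+ 4 + p0) = p1 * M1 + p2 * M2 + p4 * M4 + p0.
Proof.
rewrite RintegralD //; [|ints|ints].
rewrite RintegralD //; [|ints|ints].
rewrite RintegralD //; [|ints|ints].
rewrite !RintegralZl //; [|ints|ints|ints].
rewrite Rintegral_cst // [X in fine X]probability_setT /= mulr1.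
by [].
Qed.

Lemma LINE (f : R -> R) p0 p1 p2 p4 :
  (forall y, f y = p1 * `|y| + p2 * y ^+ 2 + p4 * y ^+ 4 + p0) ->
  (\int[mu]_y (f y)%:E)%E = (p1 * M1 + p2 * M2 + p4 * M4 + p0)%:E.
Proof.
move=> hf; rewrite -LIN.
have -> : (\int[mu]_y (f y)%:E)%E = (\int[mu]_y (p1 * `|y| + p2 * y ^+ 2 + p4 * y ^+ 4 + p0)%:E)%E.
  by apply: eq_integral => y _; rewrite hf.
rewrite /Rintegral fineK //; apply: integrable_fin_num => //; ints.
Qed.

Lemma POS p0 p1 p2 p4 :
  (forall y, 0 <= p1 * `|y| + p2 * y ^+ 2 + p4 * y ^+ 4 + p0) ->
  0 <= p1 * M1 + p2 * M2 + p4 * M4 + p0.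
Proof. by move=> h; rewrite -LIN; apply: Rintegral_ge0 => y _; exact: h. Qed.

Lemma LYA : (\int[mu]_x (Lop mu (@Vfun R) x)%:E <=
              3%:E - 2%:E * \int[mu]_x (Vfun x)%:E)%E.
Proof.
have eM : moment1 mu = M1 by [].
rewrite (@LINE _ 0 0 (M1 ^+ 3) (- 2 * M1)); last first.
  move=> y; rewrite /Lop derive2_Vfun derive1_Vfun /acoef /bcoef eM /=; ring.
rewrite (@LINE _ 0 0 (2^-1) 0); last by move=> y; rewrite /Vfun; ring.
rewrite -EFinM -EFinB lee_fin.
have hM : 0 <= M1.
  suff : 0 <= 1 * M1 + 0 * M2 + 0 * M4 + 0 by rewrite !mul0r !addr0 mul1r.
  by apply: POS => y; rewrite !mul0r !addr0 mul1r.
have h2 : 0 <= M2.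
  suff : 0 <= 0 * M1 + 1 * M2 + 0 * M4 + 0 by rewrite !mul0r add0r !addr0 mul1r.
  by apply: POS => y; rewrite !mul0r add0r !addr0 mul1r sqr_ge0.
have h4 : 0 <= M4.
  suff : 0 <= 0 * M1 + 0 * M2 + 1 * M4 + 0 by rewrite !mul0r !add0r addr0 mul1r.
  by apply: POS => y; rewrite !mul0r !add0r addr0 mul1r exprn_even_ge0.
have F2 : M1 ^+ 2 <= M2.
  have := @POS (M1 ^+ 2) (- 2 * M1) 1 0.
  have P : forall y : R, 0 <= - 2 * M1 * `|y| + 1 * y ^+ 2 + 0 * y ^+ 4 + M1 ^+ 2.
    move=> y; have -> : - 2 * M1 * `|y| + 1 * y ^+ 2 + 0 * y ^+ 4 + M1 ^+ 2 = (`|y| - M1) ^+ 2.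
      by rewrite sqr_abs; ring.
    exact: sqr_ge0.
  move/(_ P) => H; nra.
have F3 : M2 ^+ 2 <= M4.
  have := @POS (M2 ^+ 2) 0 (- 2 * M2) 1.
  have P : forall y : R, 0 <= 0 * `|y| + - 2 * M2 * y ^+ 2 + 1 * y ^+ 4 + M2 ^+ 2.
    move=> y; have -> : 0 * `|y| + - 2 * M2 * y ^+ 2 + 1 * y ^+ 4 + M2 ^+ 2 = (y ^+ 2 - M2) ^+ 2.
      by ring.
    exact: sqr_ge0.
  move/(_ P) => H; nra.
have F5 : M2 <= M4 + 1.
  have := @POS 1 0 (-1) 1.
  have P : forall y : R, 0 <= 0 * `|y| + - 1 * y ^+ 2 + 1 * y ^+ 4 + 1.
    move=> y; have -> : 0 * `|y| + - 1 * y ^+ 2 + 1 * y ^+ 4 + 1 = (y ^+ 2 - 1) ^+ 2 + y ^+ 2.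
      by ring.
    by rewrite addr_ge0 ?sqr_ge0.
  move/(_ P) => H; lra.
have F4 : forall c d, 0 < c -> d * c ^+ 2 = 1 -> 0 <= c * M1 - M2 + d * M4.
  move=> c d c0 hd.
  have := @POS 0 c (-1) d.
  have P : forall y : R, 0 <= c * `|y| + - 1 * y ^+ 2 + d * y ^+ 4 + 0.
    move=> y; rewrite sqr_abs (_ : y ^+ 4 = `|y| ^+ 4); last first.
      by rewrite -normrX ger0_norm // exprn_even_ge0.
    have := ptF4 c0 hd (normr_ge0 y); lra.
  move/(_ P) => H; lra.
have A : M1 ^+ 3 * M2 <= M1 * M4.
  have a1 : 0 <= M1 * M2 * (M2 - M1 ^+ 2) by rewrite !mulr_ge0 // subr_ge0.
  have a2 : 0 <= M1 * (M4 - M2 ^+ 2) by rewrite !mulr_ge0 // subr_ge0.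
  nra.
have B : M2 <= 3 + M1 * M4.
  have [M1ge|M1lt] := leP 1 M1.
    have : M4 <= M1 * M4 by rewrite ler_peMl.
    lra.
  have [M10|M1pos] := eqVneq M1 0.
    have c0 : 0 < M4 + 1 by lra.
    have hd : ((M4 + 1) ^+ 2)^-1 * (M4 + 1) ^+ 2 = 1 by rewrite mulVf // expf_neq0 // gt_eqF.
    have := F4 _ _ c0 hd; rewrite M10 mulr0 add0r => H.
    have : ((M4 + 1) ^+ 2)^-1 * M4 <= 1.
      rewrite ler_pdivrMl ?exprn_gt0 // mulr1; nra.
    lra.
  have c0 : 0 < M1^-1 by rewrite invr_gt0 lt_neqAle eq_sym M1pos hM.
  have hd : M1 ^+ 2 * M1^-1 ^+ 2 = 1 by rewrite -exprMn mulfV // expr1n.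
  have := F4 _ _ c0 hd; rewrite mulVf // => H.
  have : M1 ^+ 2 * M4 <= M1 * M4.
    by rewrite expr2 -mulrA ler_wpM2l // ler_piMl // ltW.
  lra.
lra.
Qed.
End CS.
End H.

Theorem mainTheorem10 (R : realType) :
  (* (a) all hypotheses of Corollary 2.3, with m = 0, V(x) = x^2/2, H = 0 *)
  ( (* V in C^2, V >= 0, V -> +oo at infinity *)
    (C2 (@Vfun R) /\ (forall x : R, 0 <= Vfun x) /\ tends_to_infty (@Vfun R)) /\
    (* H = 0 is continuous, >= 0, H/V -> 0 at infinity *)
    (continuous (fun _ : R => 0 : R) /\
     (fun x : R => 0 / Vfun x) @ +oo --> (0 : R) /\
     (fun x : R => 0 / Vfun x) @ -oo --> (0 : R)) /\
    (* (H1.2) *)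
    (forall Rr : R, 0 < Rr -> forall k1 k2 : R,
       exists B : R, forall x : R, x \in `[k1, k2] ->
         forall mu : probability R R, inPRV (@Vfun R) Rr mu ->
           `|acoef x mu| + `|bcoef x mu| <= B) /\
    (* (H1.3) *)
    (forall Rr : R, 0 < Rr -> forall k1 k2 : R,
       exists w : R -> R,
         (forall t, 0 <= t -> 0 <= w t) /\
         {within [set t : R | 0 <= t], continuous w} /\
         (forall s t, 0 <= s -> s <= t -> w s <= w t) /\
         w 0 = 0 /\
         forall x x' : R, x \in `[k1, k2] -> x' \in `[k1, k2] ->
           forall mu : probability R R, inPRV (@Vfun R) Rr mu ->
             `|acoef x mu - acoef x' mu| + `|bcoef x mu - bcoef x' mu|
               <= w `|x - x'|) /\
    (* (H2) *)
    (forall Rr : R, 0 < Rr ->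
       forall (mun : nat -> probability R R) (mu : probability R R),
         (forall n, inPRV (@Vfun R) Rr (mun n)) -> inPRV (@Vfun R) Rr mu ->
         Vweak_cvg (@Vfun R) mun mu ->
         forall x : R,
           (`|acoef x (mun n) - acoef x mu| + `|bcoef x (mun n) - bcoef x mu|)
             @[n --> \oo] --> (0 : R)) /\
    (* growth bound at 0 with H = 0 *)
    (forall C1 C2 : R, 0 < C1 -> 0 < C2 ->
       forall mu : probability R R, inPV (@Vfun R) mu ->
         ((`|acoef 0 mu| + `|bcoef 0 mu|)%:E
            <= C1%:E + C2%:E * \int[mu]_x ((0 : R)%:E))%E) /\
    (* Lyapunov condition for compactly supported measures *)
    (exists C Lam : R, 0 < C /\ 0 < Lam /\
       forall mu : probability R R, compact_supp mu ->
         (\int[mu]_x (Lop mu (@Vfun R) x)%:E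
            <= C%:E - Lam%:E * \int[mu]_x (Vfun x)%:E)%E) ) /\
  (* (b) no pointwise Lyapunov function *)
  ~ (exists U : R -> R,
       C2 U /\ (forall x, 0 <= U x) /\ tends_to_infty U /\
       exists C Lam : R, 0 < C /\ 0 < Lam /\
         forall (x : R) (mu : probability R R),
           inPV U mu -> (\int[mu]_y (`|y|)%:E < +oo)%E ->
           Lop mu U x <= C - Lam * U x).

Proof.
split; last exact: partb.
split; first by split; [exact: Vfun_C2 | split; [exact: Vfun_ge0 | exact: Vfun_infty]].
split.
  have E : (fun x : R => 0 / Vfun x) = cst 0 by apply/funext => x; rewrite mul0r.
  by split; [exact: cst_continuous | rewrite E; split; exact: cvg_cst].
split; first by move=> Rr _ k1 k2; exact: H12.
split; first by move=> Rr Rr0 k1 k2; exact: H13.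
split; first by move=> Rr _ mun mu hn h hw x; exact: H2 hn h hw x.
split.
  move=> C1 C2 c1 c2 mu _.
  rewrite integral0 mule0 adde0 lee_fin /acoef /bcoef !expr0n /= mulr0 !mul0r normr0 addr0.
  exact: ltW.
exists 3, 2; split; first by [].
split; first by [].
move=> mu cs; have [r [r0 hae]] := @cs_ae R mu cs; exact: (@LYA R mu r r0 hae).
Qed.
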